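(* Let $\mathsf S,\mathsf T$ be trees. Every morphism of polynomial endofunctors $\overline{\mathsf S}\to\overline{\mathsf T}$ is a morphism of monads. Equivalently, the forgetful functor $\mathbf{Tree}\to\mathbf{PolyEnd}$ is full.
   Context: A polynomial endofunctor is a diagram of sets $P_0\xleftarrow{s}P_2\xrightarrow{p}P_1\xrightarrow{t}P_0$ with $p$ having finite fibres; a morphism (in $\mathbf{PolyEnd}$) is a triple of maps commuting with $s,p,t$ whose middle square is a pullback. A tree is a polynomial endofunctor with all sets finite, $t$ injective, $s$ injective with singleton complement (the root), and such that iterating $\sigma$ ($\sigma(\mathrm{root})=\mathrm{root}$, $\sigma(e)=t(p(e))$ for $e\in T_2$) brings every edge to the root. A subtree of $\mathsf T$ is a tree with a morphism into $\mathsf T$ whose components are inclusions. For a tree $\mathsf T$, $\overline{\mathsf T}$ is the polynomial monad $T_0\leftarrow\mathrm{sub}'(\mathsf T)\to\mathrm{sub}(\mathsf T)\to T_0$, where $\mathrm{sub}(\mathsf T)$ is the set of subtrees, $\mathrm{sub}'(\mathsf T)$ the set of subtrees with a marked leaf, the maps return the marked leaf, forget the mark, and return the root; multiplication is grafting of subtrees and the unit sends an edge to the trivial subtree on it (this is the free monad on $\mathsf T$). $\mathbf{Tree}$ is the category whose objects are trees and whose morphisms $\mathsf S\to\mathsf T$ are monad morphisms $\overline{\mathsf S}\to\overline{\mathsf T}$ (morphisms of polynomial endofunctors respecting the monad structures). *)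

(* Defs.v *)
From Stdlib Require Import ClassicalEpsilon.
From mathcomp Require Import all_boot.
Set Implicit Arguments. Unset Strict Implicit. Unset Printing Implicit Defensive.

(* (Finiteness of the fibres of p is a property of objects; it plays  *)
(*  no role in the statement about morphisms.)          *)
Record PolyEnd := PolyEnd_ {
  P0 : Type; P1 : Type; P2 : Type;
  src : P2 -> P0; proj : P2 -> P1; tgt : P1 -> P0 }.
Arguments src : clear implicits.
Arguments proj : clear implicits.
Arguments tgt : clear implicits.

(* (f0,f1,f2) commutes with s, p, t and the middle square is a pullback:
   b |-> (p b, f2 b) is a bijection P2 -> P1 x_{Q1} Q2. *)
Definition polyend_hom (P Q : PolyEnd)
  (f0 : P0 P -> P0 Q) (f1 : P1 P -> P1 Q) (f2 : P2 P -> P2 Q) : Prop :=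
  [/\ forall b, src Q (f2 b) = f0 (src P b),
      forall b, proj Q (f2 b) = f1 (proj P b),
      forall x, tgt Q (f1 x) = f0 (tgt P x) &
      forall x (b' : P2 Q), proj Q b' = f1 x ->
        exists! b, proj P b = x /\ f2 b = b'].

(* Monad structure on a polynomial endofunctor, given by its components:
   unit Id => P  (eta1 on P1-level, eta2 on P2-level) and multiplication
   P o P => P.  An element of (P o P)_1 is a pair (x, y) with x : P1 and
   y defined on the fibre of x with tgt (y b) = src b; we take y total
   (only its values on the fibre of x matter).  An element of (P o P)_2
   over (x,y) is a pair (b, c) with proj b = x, proj c = y b. *)
Record PolyMonadStr (P : PolyEnd) := PolyMonadStr_ {
  eta1 : P0 P -> P1 P;
  eta2 : P0 P -> P2 P;
  mu1 : P1 P -> (P2 P -> P1 P) -> P1 P;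
  mu2 : P1 P -> (P2 P -> P1 P) -> P2 P -> P2 P -> P2 P }.
Arguments eta1 {P}. Arguments eta2 {P}. Arguments mu1 {P}. Arguments mu2 {P}.

(* The image of (x, y) under f o f is
   (f1 x, y') where y' (f2 b) = f1 (y b) on the fibre of x (the fibre of
   f1 x is exactly f2 of the fibre of x, by the pullback condition). *)
Definition monad_hom (P Q : PolyEnd) (MP : PolyMonadStr P) (MQ : PolyMonadStr Q)
  (f0 : P0 P -> P0 Q) (f1 : P1 P -> P1 Q) (f2 : P2 P -> P2 Q) : Prop :=
  [/\ polyend_hom f0 f1 f2,
      forall e, f1 (eta1 MP e) = eta1 MQ (f0 e),
      forall e, f2 (eta2 MP e) = eta2 MQ (f0 e) &
      forall x (y : P2 P -> P1 P) (y' : P2 Q -> P1 Q),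
        (forall b, proj P b = x -> tgt P (y b) = src P b) ->
        (forall b, proj P b = x -> y' (f2 b) = f1 (y b)) ->
        f1 (mu1 MP x y) = mu1 MQ (f1 x) y' /\
        (forall b c, proj P b = x -> proj P c = y b ->
           f2 (mu2 MP x y b c) = mu2 MQ (f1 x) y' (f2 b) (f2 c))].

(* Trees.  T0 = edges, T1 = nodes, T2 = flags (node, input edge).     *)
Section TreeDefs.
Variables (E N F : finType) (s : F -> E) (p : F -> N) (t : N -> E).

Definition sigma (e : E) : E :=
  if [pick f | s f == e] is Some f then t (p f) else e.

Definition is_tree : Prop :=
  [/\ injective t, injective s &
      exists r, [/\ r \notin codom s,
                    forall e, e \notin codom s -> e = r &
                    forall e, exists n, iter n sigma e = r]].

(* The restriction of (s,p,t) to edges A0 and nodes A1 (flags are forced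
   to be p^-1(A1) since the middle square of the inclusion morphism is a
   pullback) is a well-defined polynomial endofunctor which is a tree. *)
Definition flags_of (A1 : {set N}) : {set F} := p @^-1: A1.

Definition sigma_on (A2 : {set F}) (e : E) : E :=
  if [pick f in A2 | s f == e] is Some f then t (p f) else e.

Definition tree_on (A0 : {set E}) (A1 : {set N}) : Prop :=
  let A2 := flags_of A1 in
  [/\ {in A2, forall f, s f \in A0},
      {in A1, forall n, t n \in A0},
      {in A1 &, injective t},
      {in A2 &, injective s} &
      exists r, [/\ r \in A0, r \notin s @: A2,
                    {in A0, forall e, e \notin s @: A2 -> e = r} &
                    {in A0, forall e, exists n, iter n (sigma_on A2) e = r}]].

Lemma tree_on_root_ex A0 A1 : tree_on A0 A1 ->
  exists r, (r \in A0) && (r \notin s @: flags_of A1).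
Proof. by case=> _ _ _ _ [r [H1 H2 _ _]]; exists r; rewrite H1 H2. Qed.

Lemma tree_on_trivial e : tree_on [set e] set0.
Proof.
rewrite /tree_on /flags_of preimset0; split.
- by move=> f; rewrite in_set0.
- by move=> n; rewrite in_set0.
- by move=> n1 n2; rewrite in_set0.
- by move=> f1 f2; rewrite in_set0.
exists e; split; first by rewrite set11.
- by rewrite imset0 in_set0.
- by move=> e' /set1P.
- by move=> e' /set1P ->; exists 0.
Qed.

End TreeDefs.

Record tree := Tree {
  edge : finType; node : finType; flag : finType;
  tsrc : flag -> edge; tproj : flag -> node; ttgt : node -> edge;
  tree_ax : is_tree tsrc tproj ttgt }.
Arguments tsrc : clear implicits.
Arguments tproj : clear implicits.
Arguments ttgt : clear implicits.

Section Tbar.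
Variable T : tree.
Local Notation E := (edge T).
Local Notation N := (node T).

Definition subtree := {A : {set E} * {set N} | tree_on (tsrc T) (tproj T) (ttgt T) A.1 A.2}.

Definition sub_edges (x : subtree) := (sval x).1.
Definition sub_nodes (x : subtree) := (sval x).2.

Definition sub_root (x : subtree) : E := xchoose (tree_on_root_ex (proj2_sig x)).

Definition is_leaf (x : subtree) (e : E) : bool :=
  (e \in sub_edges x) && (e \notin ttgt T @: sub_nodes x).

Definition msubtree := {xe : subtree * E | is_leaf xe.1 xe.2}.

Definition Tbar_poly : PolyEnd :=
  @PolyEnd_ E subtree msubtree (fun b => (sval b).2) (fun b => (sval b).1) sub_root.

Definition Tbar_eta1 (e : E) : subtree :=
  exist _ ([set e], set0) (tree_on_trivial (tsrc T) (tproj T) (ttgt T) e).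

Lemma Tbar_eta_leaf e : is_leaf (Tbar_eta1 e) e.
Proof. by rewrite /is_leaf /sub_edges /sub_nodes /= set11 imset0 in_set0. Qed.

Definition Tbar_eta2 (e : E) : msubtree := exist _ (Tbar_eta1 e, e) (Tbar_eta_leaf e).

Definition mark (x : subtree) (e : E) : option msubtree :=
  match boolP (is_leaf x e) with
  | AltTrue H => Some (exist _ (x, e) H)
  | AltFalse _ => None
  end.

Definition graft_sets (x : subtree) (y : msubtree -> subtree) : {set E} * {set N} :=
  let yl e := if mark x e is Some b then y b else x in
  (sub_edges x :|: \bigcup_(e | is_leaf x e) sub_edges (yl e),
   sub_nodes x :|: \bigcup_(e | is_leaf x e) sub_nodes (yl e)).

Definition Tbar_mu1 (x : subtree) (y : msubtree -> subtree) : subtree :=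
  match excluded_middle_informative
          (tree_on (tsrc T) (tproj T) (ttgt T) (graft_sets x y).1 (graft_sets x y).2) with
  | left H => exist _ (graft_sets x y) H
  | right _ => x
  end.

(* the leaf (y b, m) of the grafted piece becomes the leaf m of the graft *)
Definition Tbar_mu2 (x : subtree) (y : msubtree -> subtree) (b c : msubtree) : msubtree :=
  if mark (Tbar_mu1 x y) (sval c).2 is Some d then d else c.

Definition Tbar_monad : PolyMonadStr Tbar_poly :=
  @PolyMonadStr_ Tbar_poly Tbar_eta1 Tbar_eta2 Tbar_mu1 Tbar_mu2.

End Tbar.

(* Main.v *)
Require Import Defs.
From Stdlib Require Import ClassicalEpsilon ProofIrrelevance.
From mathcomp Require Import all_boot.
Set Implicit Arguments. Unset Strict Implicit. Unset Printing Implicit Defensive.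

Section Gen.
Variable T : tree.
Local Notation E := (edge T).
Local Notation N := (node T).
Local Notation F := (flag T).
Local Notation s := (tsrc T).
Local Notation p := (tproj T).
Local Notation t := (ttgt T).
Local Notation sig := (sigma s p t).
Local Notation sigA A := (sigma_on s p t A).
Local Notation fl A := (flags_of p A).

Lemma t_inj : injective t. Proof. by case: (tree_ax T). Qed.
Lemma s_inj : injective s. Proof. by case: (tree_ax T). Qed.

Lemma memfl (A : {set N}) f : (f \in fl A) = (p f \in A).
Proof. by rewrite inE. Qed.

Lemma sig_s f : sig (s f) = t (p f).
Proof.
rewrite /sigma; case: pickP => [g /eqP /s_inj -> // | /(_ f)]; by rewrite eqxx.
Qed.

Lemma sigA_s (A : {set F}) f : f \in A -> sigA A (s f) = t (p f).
Proof.
move=> fA; rewrite /sigma_on; case: pickP => [g /andP[_ /eqP /s_inj ->] // | /(_ f)].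
by rewrite fA eqxx.
Qed.

Lemma sigA_ns (A : {set F}) e : e \notin s @: A -> sigA A e = e.
Proof.
move=> eA; rewrite /sigma_on; case: pickP => [g /andP[gA /eqP ge]|//].
by rewrite -ge imset_f in eA.
Qed.

Lemma sigA_in (A : {set F}) e : e \in s @: A -> sigA A e = sig e.
Proof. by case/imsetP=> f fA ->; rewrite sigA_s // sig_s. Qed.

Lemma iter_on (A : {set F}) k e :
  (forall m, m < k -> iter m sig e \in s @: A) -> iter k (sigA A) e = iter k sig e.
Proof.
elim: k => [//|k IH] H; rewrite !iterS IH; last by move=> m mk; apply: H; apply: ltnW.
by rewrite sigA_in // H.
Qed.

Lemma no_cycle f c : 0 < c -> iter c sig (s f) = s f -> False.
Proof.
move=> c0 ce; case: (tree_ax T) => _ _ [R [HR _ H3]].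
have fixR : forall n, iter n sig R = R.
  elim => // n IH; rewrite iterS IH /sigma; case: pickP => [g /eqP gR|//].
  by rewrite -gR codom_f in HR.
have cyc : forall m, iter (c * m) sig (s f) = s f.
  by elim => [|m IH]; rewrite ?muln0 // mulnS iterD IH ce.
case: (H3 (s f)) => j ej.
have : iter (c * j) sig (s f) = R.
  by rewrite -(subnK (leq_pmull j c0)) iterD ej fixR.
by rewrite cyc => eR; rewrite -eR codom_f in HR.
Qed.

Record troot (A0 : {set E}) (A1 : {set N}) (r : E) : Prop := Troot {
  tr1 : {in fl A1, forall f, s f \in A0};
  tr2 : {in A1, forall n, t n \in A0};
  tr3 : r \in A0;
  tr4 : r \notin s @: fl A1;
  tr5 : {in A0, forall e, e \notin s @: fl A1 -> e = r};
  tr6 : {in A0, forall e, exists n, iter n (sigA (fl A1)) e = r} }.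

Lemma tree_on_troot A0 A1 : tree_on s p t A0 A1 -> exists r, troot A0 A1 r.
Proof. by case=> H1 H2 _ _ [r [H3 H4 H5 H6]]; exists r; split. Qed.

Lemma troot_tree_on A0 A1 r : troot A0 A1 r -> tree_on s p t A0 A1.
Proof.
case=> H1 H2 H3 H4 H5 H6; split => //.
- by move=> a b _ _ /t_inj.
- by move=> a b _ _ /s_inj.
by exists r; split.
Qed.

Lemma subtree_troot (a : subtree T) : troot (sub_edges a) (sub_nodes a) (sub_root a).
Proof.
case: (tree_on_troot (proj2_sig a)) => r Hr.
have := xchooseP (tree_on_root_ex (proj2_sig a)); rewrite -/(sub_root a) => /andP[H1 H2].
by rewrite (tr5 Hr H1 H2).
Qed.

Lemma root_uniq (a : subtree T) e :
  e \in sub_edges a -> e \notin s @: fl (sub_nodes a) -> sub_root a = e.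
Proof. by move=> H1 H2; rewrite (tr5 (subtree_troot a) H1 H2). Qed.

Definition path_to (A0 : {set E}) (A1 : {set N}) r e k :=
  [/\ iter k sig e = r, forall m, m <= k -> iter m sig e \in A0,
      forall m, 0 < m <= k -> iter m sig e \in t @: A1 &
      forall m, m < k -> iter m sig e != r].

Lemma path_ex A0 A1 r e : troot A0 A1 r -> e \in A0 -> exists k, path_to A0 A1 r e k.
Proof.
move=> Hr eA; case: (tr6 Hr eA) => k; elim: k e eA => [|k IH] e eA.
  by rewrite /= => <-; exists 0; split => //; case.
rewrite iterSr; case: (eqVneq e r) => [-> _ | ner].
  by exists 0; split => //; [case => [_|//]; exact: (tr3 Hr) | case].
case: (boolP (e \in s @: fl A1)) => [eS| /(tr5 Hr eA) er]; last by rewrite er eqxx in ner.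
case/imsetP: eS => f fA ef; subst e; rewrite sigA_s // => Hk.
have e1A : t (p f) \in A0 by apply: (tr2 Hr); rewrite -memfl.
case: (IH _ e1A Hk) => k1 [P1 P2 P3 P4]; exists k1.+1; split.
- by rewrite iterSr sig_s.
- case=> [|m] Hm; first exact: eA.
  by rewrite iterSr sig_s; apply: P2.
- case=> [|m] // Hm; rewrite iterSr sig_s; case: m Hm => [|m] Hm.
    by rewrite /= imset_f // -memfl.
  exact: P3.
- case=> [|m] Hm; first exact: ner.
  by rewrite iterSr sig_s; apply: P4.
Qed.

Lemma path_in_s A0 A1 r e k m : troot A0 A1 r -> path_to A0 A1 r e k -> m < k ->
  iter m sig e \in s @: fl A1.
Proof.
move=> Hr [_ P2 _ P4] mk; apply: contraR (P4 _ mk) => H.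
by rewrite (tr5 Hr (P2 _ (ltnW mk)) H) eqxx.
Qed.

End Gen.

Section Gen2.
Variable T : tree.
Local Notation E := (edge T).
Local Notation N := (node T).
Local Notation F := (flag T).
Local Notation s := (tsrc T).
Local Notation p := (tproj T).
Local Notation t := (ttgt T).
Local Notation sig := (sigma s p t).
Local Notation sigA A := (sigma_on s p t A).
Local Notation fl A := (flags_of p A).

Lemma sub_eq_sub (a b : subtree T) : sub_root a = sub_root b ->
  (forall e, is_leaf a e = is_leaf b e) ->
  sub_edges a \subset sub_edges b /\ sub_nodes a \subset sub_nodes b.
Proof.
move=> rab lab; have HA := subtree_troot a; have HB := subtree_troot b.
have key : forall e, e \in sub_edges a -> e \in sub_edges b -> e \in t @: sub_nodes a -> e \in t @: sub_nodes b.
  move=> e eA eB eT; have : ~~ is_leaf b e by rewrite -lab /is_leaf eA eT.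
  by rewrite /is_leaf eB /= negbK.
have edges : forall k e, e \in sub_edges a ->
    iter k (sigA (fl (sub_nodes a))) e = sub_root a -> e \in sub_edges b.
  elim=> [|k IH] e eA.
    by rewrite /= => ->; rewrite rab; exact: (tr3 HB).
  rewrite iterSr; case: (boolP (e \in s @: fl (sub_nodes a))) => [/imsetP[f fA ->] | ens].
    rewrite sigA_s // => /IH.
    have e1A : t (p f) \in sub_edges a by apply: (tr2 HA); rewrite -memfl.
    move/(_ e1A) => e1B.
    have : t (p f) \in t @: sub_nodes b by apply: key => //; rewrite imset_f // -memfl.
    case/imsetP => m mB /t_inj pm; apply: (tr1 HB); by rewrite memfl pm.
  by move=> _; rewrite (tr5 HA eA ens) rab; exact: (tr3 HB).
have edgesS : sub_edges a \subset sub_edges b.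
  by apply/subsetP => e eA; case: (tr6 HA eA) => k; apply: edges.
split => //; apply/subsetP => n nA.
have tA : t n \in sub_edges a by exact: (tr2 HA).
have : t n \in t @: sub_nodes b.
  by apply: key => //; [exact: (subsetP edgesS) | exact: imset_f].
by case/imsetP => m mB /t_inj ->.
Qed.

Lemma sub_eq (a b : subtree T) : sub_root a = sub_root b ->
  (forall e, is_leaf a e = is_leaf b e) -> a = b.
Proof.
move=> rab lab.
case: (sub_eq_sub rab lab) => H1 H2.
case: (sub_eq_sub (esym rab) (fun e => esym (lab e))) => H3 H4.
move: H1 H2 H3 H4; case: a {rab lab} => [[A0 A1] Ha]; case: b => [[B0 B1] Hb].
rewrite /sub_edges /sub_nodes /= => H1 H2 H3 H4.
have e0 : A0 = B0 by apply/eqP; rewrite eqEsubset H1 H3.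
have e1 : A1 = B1 by apply/eqP; rewrite eqEsubset H2 H4.
subst; f_equal; apply: proof_irrelevance.
Qed.

Lemma msub_eq (b c : msubtree T) : sval b = sval c -> b = c.
Proof. by case: b c => [bv bH] [cv cH] /= e; subst; f_equal; apply: bool_irrelevance. Qed.

Lemma mark_some (x : subtree T) e : is_leaf x e -> exists2 d, mark x e = Some d & sval d = (x, e).
Proof.
move=> H; rewrite /mark.
refine (match boolP (is_leaf x e) as o return
  exists2 d, match o with AltTrue H' => Some (exist _ (x, e) H') | AltFalse _ => None end = Some d
          & sval d = (x, e) with
 | AltTrue H' => ex_intro2 _ _ (exist _ (x, e) H') erefl erefl
 | AltFalse H' => _ end).
by rewrite H in H'.
Qed.

End Gen2.

Section Graft.
Variable T : tree.
Local Notation E := (edge T).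
Local Notation N := (node T).
Local Notation F := (flag T).
Local Notation s := (tsrc T).
Local Notation p := (tproj T).
Local Notation t := (ttgt T).
Local Notation sig := (sigma s p t).
Local Notation sigA A := (sigma_on s p t A).
Local Notation fl A := (flags_of p A).

Variables (x : subtree T) (yl : E -> subtree T).
Hypothesis Hyl : forall l, is_leaf x l -> sub_root (yl l) = l.

Local Notation X0 := (sub_edges x).
Local Notation X1 := (sub_nodes x).
Local Notation r := (sub_root x).
Local Notation Y0 l := (sub_edges (yl l)).
Local Notation Y1 l := (sub_nodes (yl l)).
Definition G0 := X0 :|: \bigcup_(l | is_leaf x l) Y0 l.
Definition G1 := X1 :|: \bigcup_(l | is_leaf x l) Y1 l.

Let HX := subtree_troot x.
Let HY l : is_leaf x l -> troot (Y0 l) (Y1 l) l.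
Proof. by move=> H; rewrite -{3}(Hyl H); exact: subtree_troot. Qed.

Lemma flS (A B : {set N}) : A \subset B -> s @: fl A \subset s @: fl B.
Proof. by move=> AB; apply: imsetS; apply: preimsetS. Qed.

Lemma G1X : X1 \subset G1. Proof. exact: subsetUl. Qed.
Lemma G1Y l : is_leaf x l -> Y1 l \subset G1.
Proof. by move=> H; apply: subset_trans (subsetUr _ _); apply: (bigcup_sup l). Qed.
Lemma G0Y l e : is_leaf x l -> e \in Y0 l -> e \in G0.
Proof. by move=> H eY; rewrite in_setU; apply/orP; right; apply/bigcupP; exists l. Qed.

Lemma factA l : is_leaf x l -> r \notin s @: fl (Y1 l).
Proof.
move=> Hl; have HYl := HY Hl; apply/negP; case/imsetP => f fY rf.
have rY : r \in Y0 l by rewrite rf; apply: (tr1 HYl).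
have rl : r != l.
  apply/eqP => rl; have := tr4 HYl; by rewrite -{1}rl rf imset_f.
case: (path_ex HYl rY) => k [k1 _ _ _].
have kpos : 0 < k.
  move: k1; case: k => [|k] //=. move=> rl'. by rewrite rl' eqxx in rl.
have lX : l \in X0 by case/andP: Hl.
case: (path_ex HX lX) => a [a1 _ _ _].
apply: (@no_cycle T f (a + k)); first by rewrite addn_gt0 kpos orbT.
by rewrite iterD -rf k1 a1.
Qed.

Lemma factD l l' : is_leaf x l -> is_leaf x l' -> l \in s @: fl (Y1 l') -> False.
Proof.
move=> Hl Hl' /imsetP[f fY lf].
have HYl := HY Hl'.
have lY : l \in Y0 l' by rewrite lf; apply: (tr1 HYl).
have lX : l \in X0 by case/andP: Hl.
case: (path_ex HYl lY) => k [k1 k2 k3 k4].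
case: (path_ex HX lX) => a [a1 a2 a3 a4].
case: (leqP k a) => ka.
  have : l' \in t @: X1.
    move: k1 k2 k3 k4; case: k ka => [|k] ka k1 k2 k3 k4.
      by have := tr4 HYl; rewrite -{1}k1 /= lf imset_f.
    by rewrite -k1; apply: a3; rewrite ka.
  by case/andP: Hl' => _ /negP.
have := @path_in_s _ _ _ _ _ _ _ HYl (And4 k1 k2 k3 k4) ka.
by rewrite a1 (negbTE (factA Hl')).
Qed.

Lemma memG0 e : e \in G0 -> e \in X0 \/ exists2 l, is_leaf x l & e \in Y0 l.
Proof. by rewrite in_setU => /orP[|/bigcupP[l Hl eY]]; [left | right; exists l]. Qed.
Lemma memG1 n : n \in G1 -> n \in X1 \/ exists2 l, is_leaf x l & n \in Y1 l.
Proof. by rewrite in_setU => /orP[|/bigcupP[l Hl eY]]; [left | right; exists l]. Qed.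

Lemma G_troot : troot G0 G1 r.
Proof.
have rG : r \notin s @: fl G1.
  apply/negP; case/imsetP => f; rewrite memfl => /memG1[fX | [l Hl fY]] rf.
    by have := tr4 HX; rewrite rf imset_f // memfl.
  by have := factA Hl; rewrite rf imset_f // memfl.
have XG : forall e, e \in X0 -> e \in G0 by move=> e eX; rewrite in_setU eX.
have pathG : forall A0 A1 r' e k, troot A0 A1 r' -> path_to A0 A1 r' e k ->
    A1 \subset G1 -> iter k (sigA (fl G1)) e = r'.
  move=> A0 A1 r' e k Hr [k1 k2 k3 k4] AG; rewrite iter_on ?k1 // => m mk.
  apply: (subsetP (flS AG)); exact: (path_in_s Hr (And4 k1 k2 k3 k4) mk).
have Xiter : forall e, e \in X0 -> exists n, iter n (sigA (fl G1)) e = r.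
  move=> e eX; case: (path_ex HX eX) => k Pk; exists k; exact: (pathG _ _ _ _ _ HX Pk G1X).
split.
- move=> f; rewrite memfl => /memG1[fX | [l Hl fY]].
    by apply: XG; apply: (tr1 HX); rewrite memfl.
  by apply: (G0Y Hl); apply: (tr1 (HY Hl)); rewrite memfl.
- move=> n /memG1[nX | [l Hl nY]]; first by apply: XG; apply: (tr2 HX).
  by apply: (G0Y Hl); apply: (tr2 (HY Hl)).
- by apply: XG; exact: (tr3 HX).
- exact: rG.
- move=> e /memG0[eX | [l Hl eY]] eG.
    apply: (tr5 HX eX); apply: contra eG; exact: (subsetP (flS G1X)).
  have el : e = l by apply: (tr5 (HY Hl) eY); apply: contra eG; exact: (subsetP (flS (G1Y Hl))).
  subst e; have lX : l \in X0 by case/andP: Hl.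
  apply: (tr5 HX lX); apply: contra eG; exact: (subsetP (flS G1X)).
- move=> e /memG0[eX | [l Hl eY]]; first exact: Xiter.
  have lX : l \in X0 by case/andP: Hl.
  case: (path_ex (HY Hl) eY) => k Pk; case: (Xiter _ lX) => a Ha.
  by exists (a + k); rewrite iterD (pathG _ _ _ _ _ (HY Hl) Pk (G1Y Hl)).
Qed.

Lemma G_leaf e : (e \in G0) && (e \notin t @: G1) <->
  exists2 l, is_leaf x l & is_leaf (yl l) e.
Proof.
split.
  case/andP => /memG0[eX | [l Hl eY]] eT.
    have eL : is_leaf x e.
      rewrite /is_leaf eX; apply: contra eT; exact: (subsetP (imsetS _ G1X)).
    exists e => //; rewrite /is_leaf.
    have := tr3 (HY eL) => ->; apply: contra eT; exact: (subsetP (imsetS _ (G1Y eL))).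
  exists l => //; rewrite /is_leaf eY; apply: contra eT; exact: (subsetP (imsetS _ (G1Y Hl))).
case=> l Hl /andP[eY eT]; rewrite (G0Y Hl eY) /=.
apply/negP; case/imsetP => n /memG1[nX | [l' Hl' nY]] en.
  have eX : e \in X0 by rewrite en; apply: (tr2 HX).
  case: (path_ex (HY Hl) eY) => k [k1 k2 k3 k4].
  case: (path_ex HX eX) => a [a1 a2 a3 a4].
  case: (leqP k a) => ka.
    have : l \in t @: X1.
      move: k1 k2 k3 k4; case: k ka => [|k] ka k1 k2 k3 k4.
        by rewrite -k1 /= en imset_f.
      by rewrite -k1; apply: a3; rewrite ka.
    by case/andP: Hl => _ /negP.
  have := path_in_s (HY Hl) (And4 k1 k2 k3 k4) ka.
  by rewrite a1 (negbTE (factA Hl)).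
case: (eqVneq l l') => [ll'|nl].
  by subst l'; move/negP: eT; apply; rewrite en imset_f.
have eY' : e \in Y0 l' by rewrite en; apply: (tr2 (HY Hl')).
case: (path_ex (HY Hl) eY) => k [k1 k2 k3 k4].
case: (path_ex (HY Hl') eY') => k' [k1' k2' k3' k4'].
case: (ltngtP k k') => kk.
- have := path_in_s (HY Hl') (And4 k1' k2' k3' k4') kk.
  rewrite k1; exact: factD Hl Hl'.
- have := path_in_s (HY Hl) (And4 k1 k2 k3 k4) kk.
  rewrite k1'; exact: factD Hl' Hl.
- by move: nl; rewrite -k1 -k1' kk eqxx.
Qed.

End Graft.

Definition ylx (T : tree) (x : subtree T) (y : msubtree T -> subtree T) e :=
  if mark x e is Some b then y b else x.

Lemma mu_props (T : tree) (x : subtree T) (y : msubtree T -> subtree T) :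
  (forall l, is_leaf x l -> sub_root (ylx x y l) = l) ->
  sub_root (Tbar_mu1 x y) = sub_root x /\
  forall e, is_leaf (Tbar_mu1 x y) e <-> exists2 l, is_leaf x l & is_leaf (ylx x y l) e.
Proof.
move=> H; have HG := G_troot H; have Htree := troot_tree_on HG.
have val : sval (Tbar_mu1 x y) = (G0 x (ylx x y), G1 x (ylx x y)).
  rewrite /Tbar_mu1; case: excluded_middle_informative => [//|n].
  by case: (n Htree).
split.
  apply: root_uniq; rewrite /sub_edges /sub_nodes val /=; [exact: (tr3 HG) | exact: (tr4 HG)].
move=> e; rewrite /is_leaf /sub_edges /sub_nodes val /=; exact: G_leaf.
Qed.

Theorem mainTheorem11 (S T : tree)
  (f0 : P0 (Tbar_poly S) -> P0 (Tbar_poly T))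
  (f1 : P1 (Tbar_poly S) -> P1 (Tbar_poly T))
  (f2 : P2 (Tbar_poly S) -> P2 (Tbar_poly T)) :
  polyend_hom f0 f1 f2 ->
  monad_hom (Tbar_monad S) (Tbar_monad T) f0 f1 f2.
Proof.
move=> hom; have [hs hp ht hpb] := hom; simpl in hs, hp, ht, hpb.
have leaf_f : forall x e', is_leaf (f1 x) e' <-> exists2 l, is_leaf x l & e' = f0 l.
  move=> x e'; split.
    move=> H; pose b' : msubtree T := exist _ (f1 x, e') H.
    case: (hpb x b' erefl) => b [[bx fb] _]; exists (sval b).2.
      by have := proj2_sig b; rewrite bx.
    by rewrite -hs fb.
  case=> l Hl ->; pose b : msubtree S := exist _ (x, l) Hl.
  by have := proj2_sig (f2 b); rewrite hp hs.
have f2val : forall b, sval (f2 b) = (f1 (sval b).1, f0 (sval b).2).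
  by move=> b; rewrite [sval (f2 b)]surjective_pairing hp hs.
have root_eta : forall (T' : tree) e, sub_root (@Tbar_eta1 T' e) = e.
  move=> T' e; apply: root_uniq; first by rewrite /sub_edges /= set11.
  by rewrite /sub_nodes /= /flags_of preimset0 imset0 in_set0.
have leaf_eta : forall (T' : tree) e e', is_leaf (@Tbar_eta1 T' e) e' = (e' == e).
  by move=> T' e e'; rewrite /is_leaf /sub_edges /sub_nodes /= imset0 in_set0 andbT inE.
have eta1E : forall e, f1 (@Tbar_eta1 S e) = @Tbar_eta1 T (f0 e).
  move=> e; apply: sub_eq; first by rewrite ht !root_eta.
  move=> e'; rewrite leaf_eta; apply/idP/eqP.
    by case/leaf_f => l; rewrite leaf_eta => /eqP ->.
  by move=> ->; apply/leaf_f; exists e; rewrite ?leaf_eta.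
split => //=.
- by move=> e; apply: msub_eq; rewrite f2val /= eta1E.
move=> x y y' H1 H2.
have ySE : forall l, is_leaf x l -> exists2 d, ylx x y l = y d & sval d = (x, l).
  move=> l Hl; case: (mark_some Hl) => d md dv; exists d => //; by rewrite /ylx md.
have HyS : forall l, is_leaf x l -> sub_root (ylx x y l) = l.
  move=> l Hl; case: (ySE l Hl) => d -> dv; by rewrite H1 dv.
have yTE : forall l, is_leaf x l -> ylx (f1 x) y' (f0 l) = f1 (ylx x y l).
  move=> l Hl; case: (ySE l Hl) => d -> dv.
  have Hf : is_leaf (f1 x) (f0 l) by apply/leaf_f; exists l.
  case: (mark_some Hf) => d' md' d'v; rewrite /ylx md'.
  have -> : d' = f2 d by apply: msub_eq; rewrite d'v f2val dv.
  by apply: H2; rewrite dv.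
have HyT : forall l', is_leaf (f1 x) l' -> sub_root (ylx (f1 x) y' l') = l'.
  by move=> l' /leaf_f [l Hl ->]; rewrite yTE // ht HyS.
case: (mu_props HyS) => rS lS; case: (mu_props HyT) => rT lT.
have muE : f1 (Tbar_mu1 x y) = Tbar_mu1 (f1 x) y'.
  apply: sub_eq; first by rewrite ht rS rT ht.
  move=> e'; apply/idP/idP.
    case/leaf_f => e /lS [l Hl He] ->; apply/lT; exists (f0 l); first by apply/leaf_f; exists l.
    by rewrite yTE //; apply/leaf_f; exists e.
  case/lT => l' /leaf_f [l Hl ->]; rewrite yTE // => /leaf_f [e He ->].
  by apply/leaf_f; exists e => //; apply/lS; exists l.
split => // b c bx cy.
have Lb : is_leaf x (sval b).2 by have := proj2_sig b; rewrite bx.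
have lc : is_leaf (Tbar_mu1 x y) (sval c).2.
  apply/lS; exists (sval b).2 => //.
  case: (ySE _ Lb) => d -> dv.
  have -> : d = b by apply: msub_eq; rewrite dv; move: bx; case: (sval b) => u v /= ->.
  by have := proj2_sig c; rewrite cy.
case: (mark_some lc) => d md dv.
have lc' : is_leaf (Tbar_mu1 (f1 x) y') (sval (f2 c)).2.
  by rewrite -muE hs; apply/leaf_f; exists (sval c).2.
case: (mark_some lc') => d' md' d'v.
rewrite /= /Tbar_mu2 md md'; apply: msub_eq.
by rewrite f2val dv d'v /= muE hs.
Qed.
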